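(* Let $a>b\ge1$ be coprime positive integers and $\alpha_b,\alpha_{b+1},\dots,\alpha_a$ integers with $|\alpha_b|=1$. For each $N\in\mathbb N$ consider the equation $$m^a=\sum_{j=b}^a\alpha_jn^jN^{a-j}$$ in positive integers $m$. Then for every $\delta>0$ there exist $N_\delta$ and sets $\Gamma_{N,\delta}\subset[1,N]$ of cardinality at most $\delta N$ such that for all $N>N_\delta$ and all integers $n\in[1,N]\setminus\Gamma_{N,\delta}$ there is no positive integer $m$ satisfying this equation. *)

(* Defs.v *)
From HB Require Import structures.
From mathcomp Require Import all_boot all_order all_algebra.
Set Implicit Arguments. Unset Strict Implicit. Unset Printing Implicit Defensive.
Import Order.TTheory GRing.Theory Num.Theory.
Local Open Scope ring_scope.

Definition rhs (a b : nat) (alpha : nat -> int) (n N : nat) : int :=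
  \sum_(b <= j < a.+1) alpha j * (n%:Z) ^+ j * (N%:Z) ^+ (a - j).

(* Main.v *)
Require Import Defs.
From HB Require Import structures.
From mathcomp Require Import all_boot all_order all_algebra.
From mathcomp Require Import zify ring.
Import Order.TTheory GRing.Theory Num.Theory.
Set Implicit Arguments. Unset Strict Implicit. Unset Printing Implicit Defensive.

Lemma cube8 k : (k.+1 ^ 3 <= 8 ^ k)%N.
Proof.
elim: k => [|k IH] //.
rewrite [8 ^ _.+1]expnS; apply: leq_trans (leq_mul (leqnn 8) IH).
rewrite !expnS expn0 !muln1; nia.
Qed.

Lemma cube2 k : (k.+1 ^ 3 <= 8 * 2 ^ k)%N.
Proof.
case: (leqP k 3) => hk.
  by case: k hk => [|[|[|[|]]]].
elim: k hk => [|k IH] // hk.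
case: (ltnP 3 k) => hk'.
  have := IH hk'. rewrite [2 ^ _.+1]expnS mulnCA.
  move=> h; apply: leq_trans (leq_mul (leqnn 2) h).
  rewrite !expnS expn0 !muln1; nia.
have -> : k = 3 by lia.
by [].
Qed.


Definition wt (q : nat) : nat := if (q < 8)%N then 8 else 1.

Lemma pp_bound p k : prime p -> (k.+1 ^ 3 <= wt p * p ^ k)%N.
Proof.
move=> pp; have p2 := prime_gt1 pp; rewrite /wt.
case: k => [|k]; first by case: ifP.
case: ifP => hp.
  apply: leq_trans (cube2 _.+1) _; rewrite leq_mul2l /=.
  by rewrite leq_exp2r.
rewrite mul1n; apply: leq_trans (cube8 _.+1) _.
by rewrite leq_exp2r // leqNgt hp.
Qed.

Lemma wt_prod s : (\prod_(q <- s) wt q = 8 ^ count (fun q => q < 8) s)%N.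
Proof.
elim: s => [|q s IH]; first by rewrite big_nil.
by rewrite big_cons IH /= expnD /wt; case: ifP.
Qed.

Lemma wt_prod_le s : uniq s -> (\prod_(q <- s) wt q <= 8 ^ 8)%N.
Proof.
move=> us; rewrite wt_prod leq_pexp2l // -size_filter.
have -> : 8 = size (iota 0 8) by [].
apply: uniq_leq_size; first exact: filter_uniq.
by move=> x; rewrite mem_filter mem_iota => /andP[].
Qed.

Lemma div_mul_size p k M : prime p -> coprime p M -> (0 < M)%N ->
  (size (divisors (M * p ^ k)) <= k.+1 * size (divisors M))%N.
Proof.
move=> pp cpM M0.
have N0 : (0 < M * p ^ k)%N by rewrite muln_gt0 M0 expn_gt0 prime_gt0.
have -> : k.+1 = size [seq p ^ i | i <- iota 0 k.+1] by rewrite size_map size_iota.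
rewrite -(size_allpairs muln).
apply: uniq_leq_size; first exact: divisors_uniq.
move=> d; rewrite -dvdn_divisors // => dd.
have d0 : (0 < d)%N := dvdn_gt0 N0 dd.
have [e ce de] := pfactor_coprime pp d0.
apply/allpairsP; exists (p ^ logn p d, e); split.
- apply/mapP; exists (logn p d) => //; rewrite mem_iota /= add0n ltnS.
  have := dvdn_leq_log p N0 dd.
  rewrite lognM ?M0 ?expn_gt0 ?prime_gt0 // => h; by rewrite (logn_coprime cpM) pfactorK in h.
- rewrite -dvdn_divisors //.
  have : (e %| M * p ^ k)%N by apply: dvdn_trans dd; rewrite de dvdn_mulr.
  by rewrite Gauss_dvdl // coprimeXr // coprime_sym.
- by rewrite /= {1}de mulnC.
Qed.

Lemma dbound N : (0 < N)%N ->
  (size (divisors N) ^ 3 <= (\prod_(q <- primes N) wt q) * N)%N.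
Proof.
elim/ltn_ind: N => N IH N0.
case: (leqP N 1) => hN.
  have -> : N = 1 by apply/eqP; rewrite eqn_leq hN N0.
  have -> : primes 1 = [::] by []. by rewrite big_nil.
have pp := pdiv_prime hN.
set p := pdiv N in pp *.
have [M cpM defN] := pfactor_coprime pp N0.
set k := logn p N in defN.
have k0 : (0 < k)%N by rewrite /k logn_gt0 mem_primes pp N0 pdiv_dvd.
have M0 : (0 < M)%N by move: N0; rewrite defN muln_gt0 => /andP[].
have MN : (M < N)%N.
  rewrite {1}defN -{1}(muln1 M) ltn_pmul2l //.
  by rewrite -(expn0 p) ltn_exp2l ?prime_gt1.
have IHM := IH M MN M0.
have pnM : p \notin primes M.
  by rewrite mem_primes pp M0 /= -prime_coprime // cpM.
have hperm : perm_eq (primes N) (p :: primes M).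
  apply: uniq_perm; first exact: primes_uniq.
    by rewrite /= pnM primes_uniq.
  move=> q; rewrite defN primesM ?M0 ?expn_gt0 ?prime_gt0 //.
  by rewrite primesX // (primes_prime pp) !in_cons in_nil orbF orbC.
rewrite (perm_big _ hperm) big_cons.
apply: leq_trans (_ : (k.+1 * size (divisors M)) ^ 3 <= _)%N.
  by rewrite leq_exp2r // {1}defN div_mul_size.
rewrite expnMn {1}defN.
have := leq_mul (pp_bound k pp) IHM.
move=> h; apply: leq_trans h _; apply: eq_leq. rewrite [in RHS]/=. rewrite -!mulnA; congr (_ * _); rewrite mulnCA; congr (_ * _); exact: mulnC.
Qed.

Lemma dbound8 N : (0 < N)%N -> (size (divisors N) ^ 3 <= 8 ^ 8 * N)%N.
Proof.
move=> N0; apply: leq_trans (dbound N0) _.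
by rewrite leq_mul2r wt_prod_le ?orbT // primes_uniq.
Qed.

Definition excp (a N n : nat) : bool :=
  (1 <= n <= N)%N && has (fun w => n %/ gcdn n N == w ^ a)%N (iota 0 N.+1).

Lemma count_bound a N : (2 <= a)%N -> (0 < N)%N ->
  (count (excp a N) (iota 1 N) <=
   size (divisors N) * size [seq w <- iota 1 N | w * w <= N])%N.
Proof.
move=> a2 N0.
rewrite -size_filter.
set L := [seq n <- iota 1 N | excp a N n].
rewrite -(size_map (fun w => w ^ a) [seq w <- iota 1 N | w * w <= N])%N.
rewrite -(size_allpairs pair) -(size_map (fun n => (gcdn n N, n %/ gcdn n N))%N L).
apply: uniq_leq_size.
  rewrite map_inj_in_uniq; first by rewrite filter_uniq // iota_uniq.
  move=> x y _ _ [gx gy].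
  have hx : x = (x %/ gcdn x N * gcdn x N)%N by rewrite divnK // dvdn_gcdl.
  have hy : y = (y %/ gcdn y N * gcdn y N)%N by rewrite divnK // dvdn_gcdl.
  by rewrite {1}hx {1}hy gy gx.
move=> z /mapP [n]; rewrite mem_filter => /andP[/andP[/andP[n1 nN] /hasP[w _ /eqP hw]] _] ->.
apply/allpairsP; exists (gcdn n N, (n %/ gcdn n N)%N); split => //.
  by rewrite -dvdn_divisors // dvdn_gcdr.
have g0 : (0 < gcdn n N)%N by rewrite gcdn_gt0 n1.
have q0 : (0 < n %/ gcdn n N)%N by rewrite divn_gt0 // dvdn_leq // dvdn_gcdl.
have qN : (n %/ gcdn n N <= N)%N by apply: leq_trans (leq_div _ _) nN.
have w0 : (0 < w)%N by move: q0; rewrite hw expn_gt0 => /orP[//|/eqP a0]; move: a2; rewrite a0.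
have ww : (w * w <= w ^ a)%N.
  rewrite -(subnKC a2) expnD -{1}(muln1 (w * w)); apply: leq_mul; first by rewrite expnS expn1.
  by rewrite expn_gt0 w0.
apply/mapP; exists w => //.
rewrite mem_filter mem_iota w0 /= add1n ltnS.
have wN : (w * w <= N)%N by apply: leq_trans ww _; rewrite -hw.
rewrite wN /=; apply: leq_trans wN; exact: leq_pmulr.
Qed.

Lemma sq_bound N : (size [seq w <- iota 1 N | w * w <= N] ^ 2 <= N)%N.
Proof.
set L := [seq w <- iota 1 N | w * w <= N].
set s := size L.
case: (posnP s) => [->|s0]; first by [].
have : has (fun w => s <= w)%N L.
  apply/negPn/negP => /hasPn hn.
  have : (s <= size (iota 1 s.-1))%N.
    apply: uniq_leq_size; first by rewrite filter_uniq // iota_uniq.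
    move=> w wL; have := hn w wL; rewrite -ltnNge => ws.
    move: wL; rewrite mem_filter mem_iota => /andP[_ /andP[w1 _]].
    by rewrite mem_iota w1 /= add1n prednK.
  by rewrite size_iota leqNgt ltn_predL s0.
case/hasP => w; rewrite mem_filter => /andP[ww _] sw.
by apply: leq_trans ww; rewrite expnS expn1 leq_mul.
Qed.

Lemma PoszX' m k : Posz (m ^ k) = ((Posz m) ^+ k)%R.
Proof. by elim: k => // k IH; rewrite expnS exprS PoszM IH. Qed.

Lemma prod_expn (s : seq nat) (F : nat -> nat) k :
  (\prod_(q <- s) F q ^ k = (\prod_(q <- s) F q) ^ k)%N.
Proof.
elim: s => [|q s IH]; first by rewrite !big_nil exp1n.
by rewrite !big_cons IH expnMn.
Qed.

Lemma apower a x : (0 < a)%N -> (0 < x)%N ->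
  (forall q, prime q -> a %| logn q x)%N ->
  exists w, x = (w ^ a)%N.
Proof.
move=> a0 x0 hq.
exists (\prod_(q <- primes x) q ^ (logn q x %/ a))%N.
rewrite -prod_expn {1}(prod_prime_decomp x0) prime_decompE big_map /=.
apply: eq_big_seq => q; rewrite mem_primes => /andP[pq _].
by rewrite -expnM divnK // hq.
Qed.

Lemma rhs_factor a b alpha n' N' g : (b <= a)%N ->
  rhs a b alpha (n' * g) (N' * g) =
  ((Posz (g ^ a * n' ^ b)) *
   \sum_(b <= j < a.+1) alpha j * (n'%:Z%R) ^+ (j - b) * (N'%:Z%R) ^+ (a - j))%R.
Proof.
move=> ba; rewrite /rhs mulr_sumr; apply: eq_big_nat => j /andP[bj ja].
rewrite ltnS in ja.
have e1 : (b + (j - b))%N = j by rewrite subnKC.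
have key : forall u v, (alpha j * (n'%:Z%R * g%:Z%R) ^+ (b + u) * (N'%:Z%R * g%:Z%R) ^+ v =
   g%:Z%R ^+ (b + u + v) * n'%:Z%R ^+ b * (alpha j * n'%:Z%R ^+ u * N'%:Z%R ^+ v))%R.
  by move=> u v; rewrite !exprMn !exprD; ring.
have := key (j - b)%N (a - j)%N; rewrite e1 subnKC // => ->.
by rewrite !PoszM !PoszX'.
Qed.

Lemma alg (a b : nat) (alpha : nat -> int) (N n m : nat) : (1 <= b)%N -> (b < a)%N -> coprime a b ->
  (`|alpha b| = 1)%R -> (1 <= n <= N)%N -> (0 < m)%N ->
  (m%:Z%R ^+ a)%R = rhs a b alpha n N ->
  has (fun w => n %/ gcdn n N == w ^ a)%N (iota 0 N.+1).
Proof.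
move=> b1 ba cab hal /andP[n1 nN] m0 eq.
set g := gcdn n N.
have g0 : (0 < g)%N by rewrite gcdn_gt0 n1.
set n' := (n %/ g)%N; set N' := (N %/ g)%N.
have hn : n = (n' * g)%N by rewrite divnK // dvdn_gcdl.
have hN : N = (N' * g)%N by rewrite divnK // dvdn_gcdr.
have n'0 : (0 < n')%N by rewrite divn_gt0 // dvdn_leq // dvdn_gcdl.
have cop : gcdn n' N' = 1%N.
  have : (gcdn n' N' * g = 1 * g)%N by rewrite muln_gcdl -hn -hN mul1n.
  by move/eqP; rewrite eqn_pmul2r // => /eqP.
set P := (\sum_(b <= j < a.+1) alpha j * (n'%:Z%R) ^+ (j - b) * (N'%:Z%R) ^+ (a - j))%R.
set Q := (\sum_(b.+1 <= j < a.+1) alpha j * (n'%:Z%R) ^+ (j - b.+1) * (N'%:Z%R) ^+ (a - j))%R.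
have hP : P = (alpha b * (N'%:Z%R) ^+ (a - b) + n'%:Z%R * Q)%R.
  rewrite /P big_ltn; last by rewrite ltnS ltnW.
  rewrite subnn expr0 mulr1; congr (_ + _)%R.
  rewrite /Q mulr_sumr; apply: eq_big_nat => j /andP[bj _].
  by rewrite -(subnSK bj) exprS; ring.
have eq0 := eq; rewrite hn hN rhs_factor in eq0; last exact: ltnW.
move: eq0; rewrite -/P => {}eq.
have Ppos : (0 < P)%R.
  have : (0 < (m%:Z%R ^+ a))%R by rewrite exprn_gt0 // ltz_nat.
  rewrite eq pmulr_rgt0 // ltz_nat muln_gt0 !expn_gt0 g0 n'0.
  by case: (a) ba.
set p := absz P.
have hPp : P = p%:Z%R by rewrite /p gez0_abs // ltW.
have p0 : (0 < p)%N by rewrite -ltz_nat -hPp.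
have eqn : (m ^ a = g ^ a * n' ^ b * p)%N.
  by apply/eqP; rewrite -eqz_nat PoszX' PoszM eq hPp.
have ndq : forall q, prime q -> (q %| n')%N -> ~~ (q %| p)%N.
  move=> q pq qn; apply/negP => qp.
  have qP : (q%:Z%R %| P)%Z by rewrite dvdzE hPp.
  have qnQ : (q%:Z%R %| (n'%:Z * Q)%R)%Z by apply: dvdz_mulr; rewrite dvdzE.
  have ha1 : absz (alpha b) = 1%N by move: hal; rewrite -abszE => -[].
  move: qP; rewrite hP rpredDr // dvdzE abszM abszX ha1 mul1n /=.
  rewrite Euclid_dvdX // => /andP[qN _].
  have : (q %| gcdn n' N')%N by rewrite dvdn_gcd qn qN.
  by rewrite cop dvdn1 => /eqP q1; move: pq; rewrite q1.
have hq : forall q, prime q -> (a %| logn q n')%N.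
  move=> q pq; case: (boolP (q %| n')%N) => qn; last first.
    by rewrite logn_coprime ?dvdn0 // prime_coprime.
  rewrite -(Gauss_dvdr _ cab).
  have : logn q (m ^ a) = logn q (g ^ a * n' ^ b * p) by rewrite eqn.
  rewrite lognX !lognM ?muln_gt0 ?expn_gt0 ?g0 ?n'0 ?p0 // !lognX.
  rewrite (logn_coprime (_ : coprime q p)); last by rewrite prime_coprime // ndq.
  rewrite addn0 => e.
  have : (a %| a * logn q g + b * logn q n')%N by rewrite -e dvdn_mulr.
  by rewrite dvdn_addr // dvdn_mulr.
have [w hw] := apower (leq_trans b1 (ltnW ba)) n'0 hq.
apply/hasP; exists w; last by rewrite -/g -/n' hw.
rewrite mem_iota /= add0n ltnS.
apply: (leq_trans _ nN); apply: (leq_trans _ (leq_div n g)).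
rewrite -/n' hw; case: (posnP w) => [->//|w0].
by rewrite -{1}(expn1 w) leq_pexp2l // (leq_trans b1 (ltnW ba)).
Qed.

Theorem mainTheorem6 (a b : nat) (alpha : nat -> int)
  (hb : (1 <= b)%N) (hab : (b < a)%N) (hcop : coprime a b)
  (halpha : (`|alpha b| = 1)%R) :
  forall delta : rat, (0 < delta)%R ->
  exists (Ndelta : nat) (Gamma : nat -> {pred nat}),
    (forall N : nat, {subset Gamma N <= [pred n | (1 <= n <= N)%N]}) /\
    (forall N : nat, (Ndelta < N)%N ->
       ((count (mem (Gamma N)) (iota 1 N))%:R <= delta * N%:R)%R /\
       (forall n : nat, (1 <= n <= N)%N -> n \notin Gamma N ->
          forall m : nat, (0 < m)%N ->
            (m%:Z ^+ a)%R <> rhs a b alpha n N)).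
Proof.
move=> delta d0.
have [c hc] : exists c : nat, forall N, (0 < N)%N -> (size (divisors N) ^ 3 <= c * N)%N.
  by exists (8 ^ 8)%N; exact: dbound8.
set K : rat := ((c ^ 2)%:R / delta ^+ 6)%R.
have K0 : (0 <= K)%R by rewrite divr_ge0 // exprn_ge0 // ltW.
exists (Num.bound K), (fun N => excp a N); split.
  by move=> N n; rewrite inE /= => /andP[].
move=> N KN; split; last first.
  move=> n nN nG m m0 eq; move/negP: nG; apply.
  by rewrite unfold_in /excp nN (alg hb hab hcop halpha nN m0 eq).
have a2 : (2 <= a)%N by apply: leq_ltn_trans hab.
have N0 : (0 < N)%N by apply: leq_ltn_trans KN.
set S := count _ _.
have SE : S = count (excp a N) (iota 1 N) by [].
set d := size (divisors N).
set s := size [seq w <- iota 1 N | w * w <= N]%N.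
have Sds : (S <= d * s)%N by rewrite SE count_bound.
have S6 : (S ^ 6 <= c ^ 2 * N ^ 5)%N.
  apply: leq_trans (_ : (d * s) ^ 6 <= _)%N; first by rewrite leq_exp2r.
  rewrite expnMn.
  have -> : (c ^ 2 * N ^ 5 = (c * N) ^ 2 * N ^ 3)%N.
    by rewrite expnMn -mulnA -expnD.
  apply: leq_mul.
    by rewrite -[6]/(3 * 2)%N expnM leq_exp2r // hc.
  by rewrite -[6]/(2 * 3)%N expnM leq_exp2r // sq_bound.
rewrite leNgt; apply/negP => hlt.
have x0 : (0 < N%:R :> rat)%R by rewrite ltr0n.
have : ((delta * N%:R) ^+ 6 < S%:R ^+ 6 :> rat)%R.
  by rewrite ltrXn2r // mulr_ge0 // ltW.
move/lt_le_trans => /(_ (((c ^ 2 * N ^ 5)%N)%:R : rat)%R).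
rewrite -natrX ler_nat S6 => /(_ isT).
rewrite natrM !natrX exprMn.
have -> : (N%:R ^+ 6 = N%:R * N%:R ^+ 5 :> rat)%R by rewrite exprS.
rewrite mulrA ltr_pM2r ?exprn_gt0 // => h.
have : (N%:R < K)%R.
  by rewrite ltr_pdivlMr ?exprn_gt0 // mulrC natrX.
move/lt_trans => /(_ _ (archi_boundP K0)).
by rewrite ltr_nat ltnNge ltnW.
Qed.
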